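(* Let $i\ge 0$ be an integer. Every disk of an $\alpha_i$-metric graph $G$ is $d^{2i-1}$-convex. In particular, the center $C(G)$ of $G$ is $d^{2i-1}$-convex.
   Context: All graphs are finite, connected, unweighted, undirected, simple; $d(u,v)$ is the shortest-path distance. $I(u,v)=\{x: d(u,x)+d(x,v)=d(u,v)\}$. A graph is $\alpha_i$-metric if for all vertices $u,v,w,x$: whenever $v\in I(u,w)$, $w\in I(v,x)$ and $v,w$ are adjacent, then $d(u,x)\ge d(u,v)+d(v,x)-i$. A disk is $D(v,r)=\{u: d(u,v)\le r\}$. A vertex set $S$ is $d^k$-convex if for all $x,y\in S$ with $d(x,y)\ge k$, $I(x,y)\subseteq S$. $e(v)=\max_u d(u,v)$, $rad(G)=\min_v e(v)$, $C(G)=\{v:e(v)=rad(G)\}$. *)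

(* Defs.v *)
(* Finite simple graphs as a symmetric irreflexive relation
   [e : rel T] on a finite type [T]. *)
From mathcomp Require Import all_boot.
Set Implicit Arguments. Unset Strict Implicit. Unset Printing Implicit Defensive.

Section Graph.
Variables (T : finType) (e : rel T).

Fixpoint ball (u : T) (n : nat) : {set T} :=
  match n with
  | 0 => [set u]
  | n'.+1 => ball u n' :|: [set y | [exists x in ball u n', e x y]]
  end.

(* Shortest-path distance: least n such that v is within n steps of u
   (for connected graphs the search range 0..#|T|-1 suffices). *)
Definition dist (u v : T) : nat := find (fun n => v \in ball u n) (iota 0 #|T|).

Definition interval (u v : T) : {set T} :=
  [set x | dist u x + dist x v == dist u v].

(* alpha_i-metric: d(u,x) >= d(u,v) + d(v,x) - i, stated without subtraction. *)
Definition alpha_metric (i : nat) : Prop :=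
  forall u v w x : T,
    v \in interval u w -> w \in interval v x -> e v w ->
    dist u v + dist v x <= dist u x + i.

Definition disk (v : T) (r : nat) : {set T} := [set u | dist u v <= r].

Definition dk_convex (k : nat) (S : {set T}) : Prop :=
  forall x y : T, x \in S -> y \in S -> k <= dist x y -> interval x y \subset S.

Definition ecc (v : T) : nat := \max_(u : T) dist u v.
Definition rad : nat := \big[minn/#|T|]_(v : T) ecc v.
Definition center : {set T} := [set v | ecc v == rad].

End Graph.

(* Main.v *)
Require Import Defs.
From mathcomp Require Import all_boot.
From mathcomp Require Import zify.

Section Dist.
Variables (T : finType) (e : rel T).
Hypothesis e_sym : symmetric e.
Hypothesis e_conn : forall u v : T, connect e u v.

Lemma ball0 u : u \in ball e u 0.
Proof. by rewrite /= set11. Qed.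

Lemma ball_mono u v n m : n <= m -> v \in ball e u n -> v \in ball e u m.
Proof.
move=> Hnm Hv; elim: m Hnm => [|m IH]; first by rewrite leqn0 => /eqP <-.
rewrite leq_eqVlt => /orP [/eqP <- //|Hlt].
by rewrite /= inE IH.
Qed.

Lemma ball_step {u n v w} : v \in ball e u n -> e v w -> w \in ball e u n.+1.
Proof.
move=> Hv Hvw; rewrite /= inE; apply/orP; right; rewrite inE.
by apply/existsP; exists v; rewrite Hv Hvw.
Qed.

Lemma ball_inv u n w : w \in ball e u n.+1 ->
  w \in ball e u n \/ exists2 v, v \in ball e u n & e v w.
Proof.
rewrite /= inE => /orP [H|H]; [by left|right].
by move: H; rewrite inE => /existsP [v /andP [H1 H2]]; exists v.
Qed.

Lemma ball_tri {u v w n m} : v \in ball e u n -> w \in ball e v m ->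
  w \in ball e u (n + m).
Proof.
move=> Hv; elim: m w => [|m IH] w Hw.
  by move: Hw => /= /set1P ->; rewrite addn0.
case/ball_inv: Hw => [Hw|[x Hx Hxw]].
  by apply: ball_mono (IH w Hw); rewrite leq_add2l.
by rewrite addnS; apply: ball_step (IH x Hx) Hxw.
Qed.

Lemma ball_sym {u v n} : v \in ball e u n -> u \in ball e v n.
Proof.
elim: n v => [|n IH] v.
  by move=> /= /set1P ->; apply/set1P.
case/ball_inv => [H|[x Hx Hxv]].
  by apply: ball_mono (IH _ H).
have H1 : x \in ball e v 1 by apply: ball_step (ball0 v) _; rewrite e_sym.
by have := ball_tri H1 (IH _ Hx); rewrite add1n.
Qed.

Lemma path_ball p u : path e u p -> last u p \in ball e u (size p).
Proof.
elim: p u => [|x p IH] u /=; first by move=> _; apply: ball0.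
move=> /andP [Hux Hp].
have H1 : x \in ball e u 1 by apply: ball_step (ball0 u) Hux.
by have := ball_tri H1 (IH _ Hp); rewrite add1n.
Qed.

Lemma ball_reach u v : exists2 n, n < #|T| & v \in ball e u n.
Proof.
move: (e_conn u v) => /connectP [p Hp ->].
case/shortenP: Hp => p' Hp' Hu _.
exists (size p'); last exact: path_ball.
move/card_uniqP: Hu => /= Hc.
have := max_card (mem (u :: p')); rewrite Hc /=; done.
Qed.

Lemma dist_lt u v : dist e u v < #|T|.
Proof.
have [n Hn Hv] := ball_reach u v.
have Hhas : has (fun n => v \in ball e u n) (iota 0 #|T|).
  by apply/hasP; exists n; rewrite ?mem_iota.
by move: Hhas; rewrite has_find size_iota.
Qed.

Lemma dist_ball u v : v \in ball e u (dist e u v).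
Proof.
have [n Hn Hv] := ball_reach u v.
have Hhas : has (fun n => v \in ball e u n) (iota 0 #|T|).
  by apply/hasP; exists n; rewrite ?mem_iota.
have := nth_find 0 Hhas; rewrite nth_iota ?add0n //.
by have := dist_lt u v.
Qed.

Lemma dist_min {u v n} : v \in ball e u n -> dist e u v <= n.
Proof.
move=> Hv; case: (leqP (dist e u v) n) => // Hlt.
have Hn : n < #|T| by apply: ltn_trans Hlt (dist_lt u v).
have := @before_find _ 0 (fun n => v \in ball e u n) (iota 0 #|T|) n Hlt.
by rewrite nth_iota // add0n Hv.
Qed.

Lemma dist_sym u v : dist e u v = dist e v u.
Proof.
by apply/eqP; rewrite eqn_leq (dist_min (ball_sym (dist_ball v u))) (dist_min (ball_sym (dist_ball u v))).
Qed.

Lemma dist_tri (u v w : T) : dist e u w <= dist e u v + dist e v w.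
Proof. exact: dist_min (ball_tri (dist_ball u v) (dist_ball v w)). Qed.

Lemma dist_edge {u v} : e u v -> dist e u v <= 1.
Proof. by move=> H; apply: dist_min (ball_step (ball0 u) H). Qed.

Lemma dist_xx u : dist e u u = 0.
Proof. by apply/eqP; rewrite -leqn0 (dist_min (ball0 u)). Qed.

Lemma dist0 {u v} : dist e u v = 0 -> u = v.
Proof. by move=> H; have := dist_ball u v; rewrite H /= => /set1P ->. Qed.

Lemma dist_pred {x a n} : dist e x a = n.+1 -> exists2 a', e a' a & dist e x a' = n.
Proof.
move=> H; have := dist_ball x a; rewrite H; case/ball_inv => [Hb|[a' Ha' Hea]].
  by have := dist_min Hb; rewrite H ltnn.
exists a' => //; apply/eqP; rewrite eqn_leq (dist_min Ha') /=.
have := dist_tri x a' a; have := dist_edge Hea; rewrite H; lia.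
Qed.

Lemma interval_sym x y w : (w \in interval e y x) = (w \in interval e x y).
Proof.
by rewrite !inE (dist_sym y w) (dist_sym w x) (dist_sym y x) addnC.
Qed.

Variable i : nat.
Hypothesis Halpha : alpha_metric e i.

Lemma side x y c k a : a \in interval e x y -> dist e a c = k -> dist e x c < k ->
  (forall w, w \in interval e x y -> dist e w c <= k) ->
  (forall w, w \in interval e x y -> dist e w c = k -> dist e x a <= dist e x w) ->
  k + dist e x y <= dist e y c + i + dist e x a.
Proof.
move=> Hai Hac Hxc Hmax Hmin.
have Hai' := Hai; move: Hai; rewrite inE => /eqP Hai.
case Hxa: (dist e x a) => [|n].
  by move/dist0: Hxa => Hxa; subst; lia.
have [a' Hea Ha'] := dist_pred Hxa.
have t1 := dist_tri a' a y; have t2 := dist_tri x a' y; have t3 := dist_edge Hea.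
have Ha'I : a' \in interval e x y by rewrite inE; apply/eqP; lia.
have m1 := Hmax _ Ha'I.
have m2 : dist e a' c <> k by move=> H; have := Hmin _ Ha'I H; lia.
have t4 := dist_tri a a' c.
have s1 := dist_sym c a'; have s2 := dist_sym c a; have s3 := dist_sym a a'.
have s4 := dist_sym c y.
have := Halpha c a' a y.
rewrite !inE.
have -> : dist e c a' + dist e a' a == dist e c a by apply/eqP; lia.
have -> : dist e a' a + dist e a y == dist e a' y by apply/eqP; lia.
move=> /(_ isT isT Hea). lia.
Qed.

Lemma disk_conv c r x y z : dist e x c <= r -> dist e y c <= r ->
  2 * i - 1 <= dist e x y -> z \in interval e x y -> dist e z c <= r.
Proof.
move=> Hx Hy Hd Hz; rewrite leqNgt; apply/negP => Hzc.
have Hxi : x \in interval e x y by rewrite inE dist_xx.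
case: (@arg_maxnP T x (fun w => w \in interval e x y) (fun w => dist e w c) Hxi)
  => m Hm Hmax.
set k := dist e m c.
have Hzk := Hmax _ Hz.
have Pm : (m \in interval e x y) && (dist e m c == k) by rewrite Hm eqxx.
case: (@arg_minnP T m (fun w => (w \in interval e x y) && (dist e w c == k))
  (fun w => dist e x w) Pm) => a /andP [Ha /eqP Hak] Hamin.
case: (@arg_minnP T m (fun w => (w \in interval e x y) && (dist e w c == k))
  (fun w => dist e y w) Pm) => b /andP [Hb /eqP Hbk] Hbmin.
have A : k + dist e x y <= dist e y c + i + dist e x a.
  apply: side => //; first by lia.
  by move=> w Hw Hwk; apply: Hamin; rewrite Hw Hwk eqxx.
have B : k + dist e y x <= dist e x c + i + dist e y b.
  apply: side => //; first by rewrite interval_sym.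
  - by lia.
  - by move=> w; rewrite interval_sym; apply: Hmax.
  - by move=> w; rewrite interval_sym => Hw Hwk; apply: Hbmin; rewrite Hw Hwk eqxx.
have C : dist e x a <= dist e x b by apply: Hamin; rewrite Hb Hbk eqxx.
move: Hb; rewrite inE => /eqP Hb.
have s1 := dist_sym y b; have s2 := dist_sym y x.
lia.
Qed.

End Dist.

Theorem lemma3 (T : finType) (e : rel T)
  (e_sym : symmetric e) (e_irr : irreflexive e)
  (e_conn : forall u v : T, connect e u v) (i : nat) :
  alpha_metric e i ->
  (forall (v : T) (r : nat), dk_convex e (2 * i - 1) (disk e v r)) /\
  dk_convex e (2 * i - 1) (center e).
Proof.
move=> Ha; split.
  move=> v r x y; rewrite !inE => Hx Hy Hd; apply/subsetP => z Hz.
  by rewrite inE; apply: (@disk_conv T e e_sym e_conn i Ha v r x y z).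
move=> x y; rewrite !inE => /eqP Hx /eqP Hy Hd; apply/subsetP => z Hz.
have rad_le : forall v, rad e <= ecc e v.
  move=> v.
  have H : forall s, v \in s -> \big[minn/#|T|]_(j <- s) ecc e j <= ecc e v.
    elim => // a s IH; rewrite inE big_cons => /orP [/eqP <-|Hv].
      exact: geq_minl.
    exact: leq_trans (geq_minr _ _) (IH Hv).
  exact: H _ (mem_index_enum v).
rewrite inE eqn_leq rad_le andbT.
apply/bigmax_leqP => u _.
rewrite (@dist_sym T e e_sym e_conn).
apply: (@disk_conv T e e_sym e_conn i Ha u (rad e) x y z) _ _ Hd Hz.
- by rewrite (@dist_sym T e e_sym e_conn) -Hx; apply: leq_bigmax.
- by rewrite (@dist_sym T e e_sym e_conn) -Hy; apply: leq_bigmax.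
Qed.
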